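(* Let $f:\mathbb{R}^{n\times n}\to\mathbb{R}$ be differentiable and suppose there are constants $\underline{\nu}_f\le\overline{\nu}_f$ with $\frac{\underline{\nu}_f}{2}\|Y-X\|_{\mathsf F}^2\le f(Y)-f(X)-\langle\nabla f(X),Y-X\rangle\le\frac{\overline{\nu}_f}{2}\|Y-X\|_{\mathsf F}^2$ for all $X,Y\in\mathcal{D}_n$. Let $c_2>0$ satisfy $|f(X)-f(Y)|\ge c_2$ for all $X,Y\in\Pi_n$ with $f(X)\ne f(Y)$. Let $0<p<1$, $\epsilon\ge0$, $\overline{\nu}_h=p(1-p)(1+\epsilon)^{p-2}$, $K\ge1$, $\hat X_1,\dots,\hat X_K\in\mathcal{D}_n$, $\bar X=\frac1K\sum_{i=1}^K\hat X_i$. Suppose $0<\mu<\frac{c_2}{2n}$ and $\sigma>\max\{(\overline{\nu}_f-2\mu)/\overline{\nu}_h,0\}$. Then any global minimizer $\tilde X$ of \[ \min_{X\in\mathcal{D}_n}\ f(X)+\sigma\sum_{i,j=1}^n(X_{ij}+\epsilon)^p-\mu\|X-\bar X\|_{\mathsf F}^2 \] is a global minimizer of $\min_{X\in\Pi_n}f(X)$, and $\|\tilde X-\bar X\|_{\mathsf F}\ge\|X^*-\bar X\|_{\mathsf F}$ for every global minimizer $X^*$ of $\min_{X\in\Pi_n}f(X)$.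
   Context: $\Pi_n$ is the set of $n\times n$ permutation matrices and $\mathcal{D}_n=\{X\in\mathbb{R}^{n\times n}: X\mathbf{e}=X^{\mathsf T}\mathbf{e}=\mathbf{e},\ X\ge0\}$ the set of doubly stochastic matrices ($\mathbf e$ the all-ones vector); $\langle M,N\rangle=\mathrm{tr}(M^{\mathsf T}N)$, $\|\cdot\|_{\mathsf F}$ the Frobenius norm. *)

(* Defs.v *)
From HB Require Import structures.
From mathcomp Require Import all_boot all_order all_algebra.
From mathcomp Require Import all_classical all_reals all_analysis.
Set Implicit Arguments. Unset Strict Implicit. Unset Printing Implicit Defensive.
Import Order.TTheory GRing.Theory Num.Theory.
Import numFieldNormedType.Exports.
Local Open Scope ring_scope.

Definition frob_inner (R : realType) (n : nat) (M N : 'M[R]_n) : R :=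
  \sum_(i < n) \sum_(j < n) M i j * N i j.

Definition frob_norm (R : realType) (n : nat) (M : 'M[R]_n) : R :=
  Num.sqrt (frob_inner M M).

Definition doubly_stochastic (R : realType) (n : nat) (X : 'M[R]_n) : Prop :=
  (forall i j, 0 <= X i j) /\
  (forall i, \sum_(j < n) X i j = 1) /\
  (forall j, \sum_(i < n) X i j = 1).

Definition grad (R : realType) (n : nat) (f : 'M[R]_n -> R) (X : 'M[R]_n)
  : 'M[R]_n := \matrix_(i, j) ('D_(delta_mx i j) f X).

(* Main.v *)
Require Import Defs.
From HB Require Import structures.
From mathcomp Require Import all_boot all_order all_algebra.
From mathcomp Require Import all_classical all_reals all_analysis.
From mathcomp Require Import ring lra.
From mathcomp Require Import fingroup perm zify.
Import Order.TTheory GRing.Theory Num.Theory.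
Import numFieldNormedType.Exports.
Local Open Scope classical_set_scope.
Local Open Scope ring_scope.
Set Implicit Arguments. Unset Strict Implicit.
Section S.
Variable R : realType.

Lemma psi_derive (p k x : R) : 0 < x ->
  is_derive x 1 (fun w : R => w `^ p + k * w ^+ 2) (p * x `^ (p - 1) + k * (2 * x)).
Proof.
move=> x0.
have h1 := is_derive1_powR p x0.
have h2 : is_derive x (1:R) (fun w : R => k * w ^+ 2) (k * (2 * x)).
  apply: is_derive_eq.
  by change (k * (x * 1 + x * 1) = k * (2 * x)); ring.
exact: is_derive_eq.
Qed.

Lemma psi_MVT (p k a b : R) : 0 < a -> a < b ->
  exists2 c, a < c < b &
    (b `^ p + k * b ^+ 2) - (a `^ p + k * a ^+ 2) = (p * c `^ (p - 1) + k * (2 * c)) * (b - a).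
Proof.
move=> a0 ab.
have hd : forall x : R, x \in `]a, b[%R -> is_derive x 1 (fun w : R => w `^ p + k * w ^+ 2)
   (p * x `^ (p - 1) + k * (2 * x)).
  move=> x; rewrite in_itv /= => /andP[ax _]; apply: psi_derive; exact: lt_trans a0 ax.
have hc : {within `[a, b], continuous (fun w : R => w `^ p + k * w ^+ 2)}.
  apply: derivable_within_continuous => x; rewrite in_itv /= => /andP[ax _].
  have x0 : 0 < x by exact: lt_le_trans a0 ax.
  have := @psi_derive p k x x0; by case.
have [c cin ->] := MVT ab hd hc.
by exists c => //; move: cin; rewrite in_itv.
Qed.

Lemma pow_MVT (q a b : R) : 0 < a -> a < b ->
  exists2 c, a < c < b & b `^ q - a `^ q = (q * c `^ (q - 1)) * (b - a).
Proof.
move=> a0 ab.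
have hd : forall x : R, x \in `]a, b[%R -> is_derive x 1 (fun y : R => y `^ q) (q * x `^ (q - 1)).
  move=> x; rewrite in_itv /= => /andP[ax _]; apply: is_derive1_powR; exact: lt_trans a0 ax.
have hc : {within `[a, b], continuous (fun y : R => y `^ q)}.
  apply: derivable_within_continuous => x; rewrite in_itv /= => /andP[ax _].
  have x0 : 0 < x by exact: lt_le_trans a0 ax.
  have := is_derive1_powR q x0; by case.
have [c cin ->] := MVT ab hd hc.
by exists c => //; move: cin; rewrite in_itv.
Qed.

Lemma powR_neg_anti (q a b : R) : q <= 0 -> 0 < a -> a <= b -> b `^ q <= a `^ q.
Proof.
move=> q0 a0 ab.
have b0 : 0 < b by exact: lt_le_trans a0 ab.
have h := @ge0_ler_powR R (- q) _ a b _ _ ab.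
have {h} h : a `^ (- q) <= b `^ (- q).
  apply: h; first by rewrite oppr_ge0.
  - by rewrite nnegrE ltW.
  - by rewrite nnegrE ltW.
move: h; rewrite (powRN a) (powRN b) lef_pV2 ?posrE ?powR_gt0 //.
Qed.

Lemma scalar_ineq (p B z s : R) : 0 < p < 1 -> 0 < z - s -> z + s <= B -> 0 < s ->
  (z + s) `^ p + (z - s) `^ p <= 2 * z `^ p - p * (1 - p) * B `^ (p - 2) * s ^+ 2.
Proof.
move=> /andP[p0 p1] zs0 zsB s0.
set c := p * (1 - p) * B `^ (p - 2).
set k := c / 2.
have z0 : 0 < z by lra.
have zs1 : z < z + s by lra.
have zs2 : z - s < z by lra.
have [x1 /andP[x1a x1b] E1] := @psi_MVT p k z (z + s) z0 zs1.
have [x2 /andP[x2a x2b] E2] := @psi_MVT p k (z - s) z zs0 zs2.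
have x2x1 : x2 < x1 by exact: lt_trans x2b x1a.
have x20 : 0 < x2 by exact: lt_trans zs0 x2a.
have [y /andP[ya yb] E3] := @pow_MVT (p - 1) x2 x1 x20 x2x1.
have y0 : 0 < y by exact: lt_trans x20 ya.
have yB : y <= B by lra.
have hy : B `^ (p - 2) <= y `^ (p - 2) by apply: powR_neg_anti => //; lra.
have ineq : p * x1 `^ (p - 1) + k * (2 * x1) <= p * x2 `^ (p - 1) + k * (2 * x2).
  have : p * (x1 `^ (p - 1) - x2 `^ (p - 1)) + c * (x1 - x2) <= 0.
    rewrite E3 (_ : p - 1 - 1 = p - 2); last by ring.
    rewrite /c.
    set Y := y `^ (p-2). set Bq := B `^ (p-2).
    have -> : p * ((p - 1) * Y * (x1 - x2)) + p * (1 - p) * Bq * (x1 - x2) =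
       - ((x1 - x2) * (p * (1 - p)) * (Y - Bq)) by ring.
    rewrite oppr_le0; apply: mulr_ge0; last by rewrite subr_ge0.
    apply: mulr_ge0; first lra.
    apply: mulr_ge0; lra.
  move=> H; rewrite -subr_le0.
  have -> : p * x1 `^ (p - 1) + k * (2 * x1) - (p * x2 `^ (p - 1) + k * (2 * x2)) =
     p * (x1 `^ (p - 1) - x2 `^ (p - 1)) + c * (x1 - x2) by rewrite /k; field.
  exact: H.
have : (z + s) `^ p + k * (z + s) ^+ 2 - (z `^ p + k * z ^+ 2) <=
       z `^ p + k * z ^+ 2 - ((z - s) `^ p + k * (z - s) ^+ 2).
  rewrite E1 E2 (_ : z + s - z = s); last by ring.
  rewrite (_ : z - (z - s) = s); last by ring.
  by apply: ler_wpM2r; [lra|].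
rewrite -subr_ge0 => H.
rewrite -subr_ge0.
have -> : 2 * z `^ p - c * s ^+ 2 - ((z + s) `^ p + (z - s) `^ p) =
  z `^ p + k * z ^+ 2 - ((z - s) `^ p + k * (z - s) ^+ 2) -
  ((z + s) `^ p + k * (z + s) ^+ 2 - (z `^ p + k * z ^+ 2)) by rewrite /k; field.
exact: H.
Qed.
End S.

Section C.
Variable R : realType.
Variable n : nat.
Implicit Types X D : 'M[R]_n.

Definition fracb X i j := (0 < X i j) && (X i j < 1).

Lemma term_le_sum (F : 'I_n -> R) j : (forall i, 0 <= F i) -> F j <= \sum_i F i.
Proof. by move=> h; rewrite (bigD1 j) //= lerDl sumr_ge0. Qed.

Lemma two_le_sum (F : 'I_n -> R) j k : (forall i, 0 <= F i) -> j != k ->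
  F j + F k <= \sum_i F i.
Proof.
move=> h jk; rewrite (bigD1 j) //= lerD2l (bigD1 k) 1?eq_sym //= lerDl.
by apply: sumr_ge0.
Qed.

Lemma DS_tr X : doubly_stochastic X -> doubly_stochastic X^T.
Proof.
move=> [h0 [hr hc]]; split; first by move=> i j; rewrite mxE.
by split=> i; [under eq_bigr do rewrite mxE; exact: hc | under eq_bigr do rewrite mxE; exact: hr].
Qed.

Lemma DS_le1 X i j : doubly_stochastic X -> X i j <= 1.
Proof. by move=> [h0 [hr _]]; rewrite -(hr i); apply: term_le_sum. Qed.

Lemma row_two X i j : doubly_stochastic X -> fracb X i j ->
  exists j', j' != j /\ fracb X i j'.
Proof.
move=> hX hf; case: (boolP [exists j', (j' != j) && fracb X i j']).
  by move=> /existsP[j' /andP[h1 h2]]; exists j'.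
rewrite negb_exists => /forallP hn.
have [h0 [hr _]] := hX.
move: hf; rewrite /fracb => /andP[x0 x1].
have hs : \sum_(k | k != j) X i k = 1 - X i j.
  by have := hr i; rewrite (bigD1 j) //=; lra.
have hz : \sum_(k | k != j) X i k = 0.
  apply: big1 => k kj.
  have := hn k; rewrite kj /= /fracb negb_and -!leNgt => /orP[|] hk.
    by apply/eqP; rewrite eq_le hk h0.
  exfalso.
  have : X i k <= \sum_(k | k != j) X i k.
    by rewrite [X in _ <= X](bigD1 k) //= lerDl sumr_ge0.
  rewrite hs; lra.
lra.
Qed.

Lemma perm_mxE' (s : 'S_n) i j : (perm_mx s : 'M[R]_n) i j = (s i == j)%:R.
Proof. by rewrite /perm_mx !mxE. Qed.

Lemma sum_eq1 (a : 'I_n) : \sum_(j < n) ((a == j)%:R : R) = 1.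
Proof.
rewrite (bigD1 a) //= eqxx big1 ?addr0 // => j ja.
by rewrite eq_sym (negbTE ja).
Qed.

Lemma perm_DS (s : 'S_n) : doubly_stochastic (perm_mx s : 'M[R]_n).
Proof.
split; first by move=> i j; rewrite perm_mxE' ler0n.
split=> i.
  by under eq_bigr do rewrite perm_mxE'; exact: sum_eq1.
under eq_bigr do rewrite perm_mxE'.
rewrite (bigD1 (s^-1 i)%g) //= permKV eqxx big1 ?addr0 // => j ji.
case: eqP => // e; case/negP: ji; by rewrite -e permK.
Qed.

Lemma is_perm_DS X : is_perm_mx X -> doubly_stochastic X.
Proof. by move=> /is_perm_mxP[s ->]; exact: perm_DS. Qed.

Lemma is_perm_01 X i j : is_perm_mx X -> X i j = 0 \/ X i j = 1.
Proof.
move=> /is_perm_mxP[s ->]; rewrite perm_mxE'.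
by case: eqP => _; [right|left].
Qed.

Lemma nonfrac_perm X : doubly_stochastic X -> (forall i j, ~~ fracb X i j) -> is_perm_mx X.
Proof.
move=> hX hn.
have [h0 [hr hc]] := hX.
have h01 : forall i j, X i j = 0 \/ X i j = 1.
  move=> i j; have := hn i j; rewrite /fracb negb_and -!leNgt => /orP[] h.
    by left; apply/eqP; rewrite eq_le h h0.
  by right; apply/eqP; rewrite eq_le h DS_le1.
have hex : forall i, exists j, X i j = 1.
  move=> i; case: (boolP [exists j, X i j == 1]) => [/existsP[j /eqP] | ]; first by exists j.
  rewrite negb_exists => /forallP hj; exfalso.
  have : \sum_j X i j = 0.
    by apply: big1 => j _; have [//|e] := h01 i j; move: (hj j); rewrite e eqxx.
  by rewrite hr; move/eqP; rewrite oner_eq0.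
pose s i := odflt i [pick j | X i j == 1].
have hs : forall i, X i (s i) = 1.
  move=> i; rewrite /s; case: pickP => [j /eqP //|] /= h.
  by have [j hj] := hex i; move: (h j); rewrite hj eqxx.
have huniq : forall i j, X i j = 1 -> j = s i.
  move=> i j hj; apply/eqP; case: eqP => // /eqP ne; exfalso.
  have := @two_le_sum (fun k => X i k) j (s i) (fun k => h0 i k) ne.
  by rewrite /= hj hs hr; lra.
have sinj : injective s.
  move=> i i' e; apply/eqP; case: eqP => // /eqP ne; exfalso.
  have := @two_le_sum (fun k => X k (s i)) i i' (fun k => h0 k (s i)) ne.
  by rewrite /= hs e hs hc; lra.
apply/is_perm_mxP; exists (perm sinj); apply/matrixP => i j.
rewrite perm_mxE' permE.
case: eqP => [<-|ne]; first by rewrite hs.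
have [//|e] := h01 i j.
by case: ne; rewrite (huniq i j e).
Qed.

Lemma count_rows (P : 'I_n -> 'I_n -> bool) :
  (forall i j, P i j -> exists j', j' != j /\ P i j') ->
  (2 * #|[pred i | [exists j, P i j]]| <= \sum_i \sum_j (P i j : nat))%N.
Proof.
move=> H; rewrite mulnC -sum_nat_const.
rewrite [X in (_ <= X)%N](bigID [pred i | [exists j, P i j]]) /=.
apply: leq_trans (leq_addr _ _).
apply: leq_sum => i /existsP[j hj]; have [j' [ne hj']] := H i j hj.
rewrite (bigD1 j) //= hj (bigD1 j') //= hj'.
lia.
Qed.

Lemma card_pairs (P : 'I_n -> 'I_n -> bool) :
  #|[pred x : 'I_n * 'I_n | P x.1 x.2]| = \sum_i \sum_j (P i j : nat).
Proof.
rewrite pair_big /= -sum1_card big_mkcond /=.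
by apply: eq_bigr => x _; rewrite inE; case: (P x.1 x.2).
Qed.

Lemma fracb_tr X i j : fracb X^T j i = fracb X i j.
Proof. by rewrite /fracb mxE. Qed.

Lemma exists_dir X : doubly_stochastic X -> ~~ is_perm_mx X ->
  exists D : 'M[R]_n, [/\ D != 0, (forall i, \sum_j D i j = 0),
     (forall j, \sum_i D i j = 0) & (forall i j, D i j != 0 -> fracb X i j)].
Proof.
move=> hX hnp.
pose S := [pred x : 'I_n * 'I_n | fracb X x.1 x.2].
pose Rw := [pred i : 'I_n | [exists j, fracb X i j]].
pose Cl := [pred j : 'I_n | [exists i, fracb X i j]].
have [x0 hx0] : exists x, x \in S.
  case: (boolP [exists x, x \in S]) => [/existsP[x hx]|]; first by exists x.
  rewrite negb_exists => /forallP hn; case/negP: hnp; apply: nonfrac_perm => // i j.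
  by have := hn (i, j); rewrite inE.
have cardS : (#|Rw| + #|Cl| <= #|S|)%N.
  have e1 : #|S| = \sum_i \sum_j (fracb X i j : nat) by exact: card_pairs.
  have e2 : #|S| = \sum_j \sum_i (fracb X i j : nat) by rewrite e1 exchange_big.
  have h1 : (2 * #|Rw| <= \sum_i \sum_j (fracb X i j : nat))%N.
    apply: count_rows => i j h; exact: row_two hX h.
  have h2 : (2 * #|Cl| <= \sum_j \sum_i (fracb X i j : nat))%N.
    apply: (count_rows (P := fun j i => fracb X i j)) => j i h.
    have h' : fracb X^T j i by rewrite fracb_tr.
    have [i' [ne hi']] := row_two (DS_tr hX) h'.
    by exists i'; split => //; rewrite -fracb_tr.
  rewrite -(leq_pmul2l (isT : (0 < 2)%N)) mulnDr [X in (_ <= X)%N]mul2n -addnn.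
  by apply: leq_add; [rewrite {1}e1 | rewrite {1}e2].
have rw_pos : (0 < #|Rw|)%N.
  apply/card_gt0P; exists x0.1; rewrite inE; apply/existsP; exists x0.2; exact: hx0.
have inRw : forall k : 'I_#|S|, (enum_val k).1 \in Rw.
  move=> k; have := enum_valP k; rewrite !inE => h; apply/existsP; exists (enum_val k).2; exact: h.
have inCl : forall k : 'I_#|S|, (enum_val k).2 \in Cl.
  move=> k; have := enum_valP k; rewrite !inE => h; apply/existsP; exists (enum_val k).1; exact: h.
pose A1 : 'M[R]_(#|S|, #|Rw|) := \matrix_(k, a) (((enum_val k).1 == enum_val a)%:R).
pose A2 : 'M[R]_(#|S|, #|Cl|) := \matrix_(k, b) (((enum_val k).2 == enum_val b)%:R).
pose A := row_mx A1 A2.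
pose v : 'cV[R]_(#|Rw| + #|Cl|) := col_mx (const_mx 1) (const_mx (-1)).
have sumRw : forall y, y \in Rw -> \sum_(a < #|Rw|) ((y == enum_val a)%:R : R) = 1.
  move=> y hy; rewrite -(big_enum_val (fun z => ((y == z)%:R : R))) /=.
  rewrite (bigD1 y) //= eqxx big1 ?addr0 // => z /andP[_ ne].
  by rewrite eq_sym (negbTE ne).
have sumCl : forall y, y \in Cl -> \sum_(a < #|Cl|) ((y == enum_val a)%:R : R) = 1.
  move=> y hy; rewrite -(big_enum_val (fun z => ((y == z)%:R : R))) /=.
  rewrite (bigD1 y) //= eqxx big1 ?addr0 // => z /andP[_ ne].
  by rewrite eq_sym (negbTE ne).
have Av : A *m v = 0.
  rewrite mul_row_col; apply/matrixP => k c; rewrite mxE [RHS]mxE.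
  have e1 : (A1 *m const_mx 1) k c = 1.
    rewrite mxE -[RHS](sumRw _ (inRw k)); apply: eq_bigr => a _; by rewrite !mxE mulr1.
  have e2 : (A2 *m const_mx (-1)) k c = -1.
    rewrite mxE -[in RHS](sumCl _ (inCl k)) -sumrN; apply: eq_bigr => b _; by rewrite !mxE mulrN1.
  by rewrite e1 e2 subrr.
have vnz : v != 0.
  apply/negP => /eqP hv.
  have := congr1 (fun M : 'cV[R]_(#|Rw| + #|Cl|) => M (lshift #|Cl| (Ordinal rw_pos)) 0) hv.
  by rewrite /v col_mxEu !mxE => /eqP; rewrite oner_eq0.
have rkA : (\rank A < #|S|)%N.
  have : (\rank A < #|Rw| + #|Cl|)%N.
    rewrite ltn_neqAle rank_leq_col andbT; apply/negP => /eqP hr.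
    have hf : row_free A^T by rewrite /row_free mxrank_tr hr.
    have : (v^T *m A^T == 0) by rewrite -trmx_mul Av trmx0.
    rewrite mulmx_free_eq0 // => /eqP h; case/negP: vnz; apply/eqP.
    by rewrite -(trmxK v) h trmx0.
  move=> h; exact: leq_trans h cardS.
have nrf : ~~ row_free A by rewrite /row_free ltn_eqF.
have kz : kermx A != 0 by rewrite kermx_eq0.
have [k0 hk0] : exists k0, row k0 (kermx A) != 0.
  case: (boolP [exists k, row k (kermx A) != 0]) => [/existsP[k hk]|]; first by exists k.
  rewrite negb_exists => /forallP hk; case/negP: kz; apply/eqP/row_matrixP => k.
  by rewrite row0; apply/eqP; move: (hk k); rewrite negbK.
pose u := row k0 (kermx A).
have uA : u *m A = 0 by rewrite /u -row_mul mulmx_ker row0.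
have [uA1 uA2] : u *m A1 = 0 /\ u *m A2 = 0.
  by apply: eq_row_mx; rewrite -mul_mx_row uA row_mx0.
have [k1 hk1] : exists k1, u 0 k1 != 0.
  case: (boolP [exists k, u 0 k != 0]) => [/existsP[k hk]|]; first by exists k.
  rewrite negb_exists => /forallP hk; case/negP: hk0; apply/eqP/matrixP => a b.
  by rewrite (ord1 a) [RHS]mxE; apply/eqP; move: (hk b); rewrite negbK.
pose D : 'M[R]_n := \matrix_(i, j) \sum_k u 0 k * ((enum_val k == (i, j))%:R).
exists D; split.
- apply/negP => /eqP hD.
  have := congr1 (fun M : 'M[R]_n => M (enum_val k1).1 (enum_val k1).2) hD.
  rewrite !mxE (bigD1 k1) //= -surjective_pairing eqxx mulr1 big1 ?addr0.
    by move=> h; move: hk1; rewrite h eqxx.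
  by move=> k kk1; rewrite (inj_eq enum_val_inj) (negbTE kk1) mulr0.
- move=> i.
  under eq_bigr do rewrite mxE.
  rewrite exchange_big /=.
  have inner : forall k, \sum_j u 0 k * ((enum_val k == (i, j))%:R) =
      u 0 k * (((enum_val k).1 == i)%:R).
    move=> k; rewrite -mulr_sumr; congr (_ * _).
    case: (enum_val k) => a b /=.
    case: (eqVneq a i) => [->|ne].
      by under eq_bigr do rewrite xpair_eqE eqxx /=; rewrite sum_eq1.
    by apply: big1 => j _; rewrite xpair_eqE (negbTE ne).
  under eq_bigr do rewrite inner.
  case: (boolP (i \in Rw)) => hi.
    have h := congr1 (fun M : 'rV[R]_#|Rw| => M 0 (enum_rank_in hi i)) uA1.
    rewrite /= [RHS]mxE in h; apply: (eq_trans _ h); rewrite mxE.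
    by apply: eq_bigr => k _; rewrite [A1 _ _]mxE (enum_rankK_in hi hi).
  apply: big1 => k _; case: eqP => [e|]; last by rewrite mulr0.
  by move: (inRw k); rewrite e (negbTE hi).
- move=> j.
  under eq_bigr do rewrite mxE.
  rewrite exchange_big /=.
  have inner : forall k, \sum_i u 0 k * ((enum_val k == (i, j))%:R) =
      u 0 k * (((enum_val k).2 == j)%:R).
    move=> k; rewrite -mulr_sumr; congr (_ * _).
    case: (enum_val k) => a b /=.
    case: (eqVneq b j) => [->|ne].
      by under eq_bigr do rewrite xpair_eqE eqxx andbT /=; rewrite sum_eq1.
    by apply: big1 => i _; rewrite xpair_eqE (negbTE ne) andbF.
  under eq_bigr do rewrite inner.
  case: (boolP (j \in Cl)) => hj.
    have h := congr1 (fun M : 'rV[R]_#|Cl| => M 0 (enum_rank_in hj j)) uA2.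
    rewrite /= [RHS]mxE in h; apply: (eq_trans _ h); rewrite mxE.
    by apply: eq_bigr => k _; rewrite [A2 _ _]mxE (enum_rankK_in hj hj).
  apply: big1 => k _; case: eqP => [e|]; last by rewrite mulr0.
  by move: (inCl k); rewrite e (negbTE hj).
- move=> i j; rewrite mxE; apply: contraR => hf; apply/eqP; apply: big1 => k _.
  case: eqP => [e|]; last by rewrite mulr0.
  by move: (enum_valP k); rewrite e inE /= (negbTE hf).
Qed.
End C.

Unset Implicit Arguments. Set Strict Implicit.
Section M.
Variable R : realType.

Lemma entry_ineq (p eps x e : R) : 0 < p < 1 -> 0 <= eps -> 0 <= x ->
  (e != 0 -> 0 < x + e < 1 /\ 0 < x - e < 1) ->
  (x + e + eps) `^ p + (x - e + eps) `^ p <=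
    2 * (x + eps) `^ p - p * (1 - p) * (1 + eps) `^ (p - 2) * e ^+ 2.
Proof.
move=> hp he hx hE.
case: (eqVneq e 0) => [->|ne].
  rewrite !addr0 subr0 expr0n /= mulr0 subr0; lra.
have [/andP[h1 h2] /andP[h3 h4]] := hE ne.
case: (ltgtP e 0) => [en|ep|e0]; last by move: ne; rewrite e0 eqxx.
- have a1 : 0 < x + eps - - e by lra.
  have a2 : x + eps + - e <= 1 + eps by lra.
  have a3 : 0 < - e by lra.
  have := @scalar_ineq R p (1 + eps) (x + eps) (- e) hp a1 a2 a3.
  rewrite sqrrN.
  have -> : x + eps + - e = x - e + eps by ring.
  have -> : x + eps - - e = x + e + eps by ring.
  by rewrite addrC.
- have a1 : 0 < x + eps - e by lra.
  have a2 : x + eps + e <= 1 + eps by lra.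
  have := @scalar_ineq R p (1 + eps) (x + eps) e hp a1 a2 ep.
  have -> : x + eps + e = x + e + eps by ring.
  by have -> : x + eps - e = x - e + eps by ring.
Qed.
End M.

Section Sums.
Variable R : realType.
Variable n : nat.
Implicit Types F G : 'I_n -> 'I_n -> R.

Lemma dsumD F G : \sum_i \sum_j (F i j + G i j) = \sum_i \sum_j F i j + \sum_i \sum_j G i j.
Proof. by rewrite -big_split; apply: eq_bigr => i _; rewrite big_split. Qed.

Lemma dsumZ (c : R) F : \sum_i \sum_j (c * F i j) = c * \sum_i \sum_j F i j.
Proof. by rewrite mulr_sumr; apply: eq_bigr => i _; rewrite mulr_sumr. Qed.

Lemma dsum_le F G : (forall i j, F i j <= G i j) -> \sum_i \sum_j F i j <= \sum_i \sum_j G i j.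
Proof. by move=> h; apply: ler_sum => i _; apply: ler_sum => j _; exact: h. Qed.

Lemma dterm_le F i j : (forall i j, 0 <= F i j) -> F i j <= \sum_i \sum_j F i j.
Proof.
move=> h.
have h1 := term_le_sum (F := fun k => F i k) j (h i).
have h2 := term_le_sum (F := fun k => \sum_l F k l) i (fun k => sumr_ge0 _ (fun l _ => h k l)).
exact: le_trans h1 h2.
Qed.

Lemma fi_ge0 (M : 'M[R]_n) : 0 <= frob_inner M M.
Proof. by apply: sumr_ge0 => i _; apply: sumr_ge0 => j _; rewrite -expr2 sqr_ge0. Qed.

Lemma frob_norm_sq (M : 'M[R]_n) : frob_norm M ^+ 2 = frob_inner M M.
Proof. by rewrite /frob_norm sqr_sqrtr // fi_ge0. Qed.

Lemma frob_norm_ge0 (M : 'M[R]_n) : 0 <= frob_norm M.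
Proof. exact: sqrtr_ge0. Qed.

Lemma fi_N (g E : 'M[R]_n) : frob_inner g (- E) = - frob_inner g E.
Proof.
rewrite /frob_inner -sumrN; apply: eq_bigr => i _; rewrite -sumrN.
by apply: eq_bigr => j _; rewrite mxE mulrN.
Qed.

Lemma fi_NN (E : 'M[R]_n) : frob_inner (- E) (- E) = frob_inner E E.
Proof. by rewrite /frob_inner; apply: eq_bigr => i _; apply: eq_bigr => j _; rewrite !mxE mulrNN. Qed.

Lemma fi_gt0 (E : 'M[R]_n) : E != 0 -> 0 < frob_inner E E.
Proof.
move=> hE.
have [i [j hij]] : exists i j, E i j != 0.
  case: (boolP [exists i, exists j, E i j != 0]) => [/existsP[i /existsP[j h]]|]; first by exists i, j.
  rewrite negb_exists => /forallP h; case/negP: hE; apply/eqP/matrixP => i j.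
  by move: (h i); rewrite negb_exists => /forallP /(_ j); rewrite negbK mxE => /eqP.
apply: lt_le_trans (dterm_le (fun i j => E i j * E i j) i j _).
  by rewrite /=; case: (ltgtP (E i j) 0) hij => h; rewrite ?eqxx //; nra.
by move=> k l; rewrite -expr2 sqr_ge0.
Qed.

Lemma DS_add (X E : 'M[R]_n) : doubly_stochastic X ->
  (forall i, \sum_j E i j = 0) -> (forall j, \sum_i E i j = 0) ->
  (forall i j, 0 <= X i j + E i j) -> doubly_stochastic (X + E).
Proof.
move=> [h0 [hr hc]] er ec hp; split; first by move=> i j; rewrite mxE.
split=> i.
  by under eq_bigr do rewrite mxE; rewrite big_split /= hr er addr0.
by under eq_bigr do rewrite mxE; rewrite big_split /= hc ec addr0.
Qed.

Lemma small_t (X D : 'M[R]_n) : (forall i j, D i j != 0 -> fracb X i j) ->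
  exists t : R, 0 < t /\ forall i j, D i j != 0 ->
     t * `|D i j| < X i j /\ t * `|D i j| < 1 - X i j.
Proof.
move=> hD.
pose m i j := if D i j != 0 then Num.min (X i j) (1 - X i j) else 1.
have mpos : forall i j, 0 < m i j.
  move=> i j; rewrite /m; case: ifP => // /hD /andP[a b].
  by rewrite lt_min a subr_gt0 b.
pose W := \sum_i \sum_j (`|D i j| / m i j).
have wge : forall i j, 0 <= `|D i j| / m i j.
  by move=> i j; rewrite divr_ge0 // ltW.
have wle : forall i j, `|D i j| / m i j <= W.
  by move=> i j; apply: (dterm_le (fun i j => `|D i j| / m i j)).
have W0 : 0 <= W by apply: sumr_ge0 => i _; apply: sumr_ge0 => j _; exact: wge.
have W1 : 0 < W + 1 by lra.
exists (W + 1)^-1; split; first by rewrite invr_gt0.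
move=> i j nz.
have hm := mpos i j.
have h1 : `|D i j| <= W * m i j by rewrite -ler_pdivrMr // wle.
have h2 : (W + 1)^-1 * `|D i j| < m i j.
  rewrite mulrC ltr_pdivrMr // mulrDr mulr1 [m i j * W]mulrC; lra.
have hm1 : m i j <= X i j by rewrite /m nz ge_min lexx.
have hm2 : m i j <= 1 - X i j by rewrite /m nz ge_min lexx orbT.
split; lra.
Qed.
End Sums.

Section V.
Variable R : realType.
Variable n : nat.

Lemma dsumB (F G : 'I_n -> 'I_n -> R) :
  \sum_i \sum_j (F i j - G i j) = \sum_i \sum_j F i j - \sum_i \sum_j G i j.
Proof. by rewrite -sumrB; apply: eq_bigr => i _; rewrite sumrB. Qed.

Lemma vertex_core (f : 'M[R]_n -> R) (g : 'M[R]_n -> 'M[R]_n) (nu_hi p eps mu sigma : R)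
  (Xb Xt E : 'M[R]_n) :
  (forall X Y, doubly_stochastic X -> doubly_stochastic Y ->
     f Y - f X - frob_inner (g X) (Y - X) <= nu_hi / 2 * frob_norm (Y - X) ^+ 2) ->
  0 < p < 1 -> 0 <= eps -> 0 <= sigma ->
  nu_hi - 2 * mu < sigma * (p * (1 - p) * (1 + eps) `^ (p - 2)) ->
  doubly_stochastic Xt ->
  (forall X, doubly_stochastic X ->
     f Xt + sigma * (\sum_i \sum_j (Xt i j + eps) `^ p) - mu * frob_norm (Xt - Xb) ^+ 2 <=
     f X + sigma * (\sum_i \sum_j (X i j + eps) `^ p) - mu * frob_norm (X - Xb) ^+ 2) ->
  E != 0 -> (forall i, \sum_j E i j = 0) -> (forall j, \sum_i E i j = 0) ->
  (forall i j, E i j != 0 -> 0 < Xt i j + E i j < 1 /\ 0 < Xt i j - E i j < 1) ->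
  False.
Proof.
move=> hup hp heps hsig hcoef hXt hmin Enz Er Ec He.
have [h0 _] := hXt.
have nn1 : forall i j, 0 <= Xt i j + E i j.
  move=> i j; case: (eqVneq (E i j) 0) => [->|nz]; first by rewrite addr0.
  by have [/andP[a _] _] := He i j nz; exact: ltW.
have nn2 : forall i j, 0 <= Xt i j + (- E) i j.
  move=> i j; rewrite mxE; case: (eqVneq (E i j) 0) => [->|nz]; first by rewrite oppr0 addr0.
  by have [_ /andP[a _]] := He i j nz; exact: ltW.
have D1 : doubly_stochastic (Xt + E) by apply: DS_add.
have D2 : doubly_stochastic (Xt - E).
  apply: DS_add => //.
  - by move=> i; under eq_bigr do rewrite mxE; rewrite sumrN Er oppr0.
  - by move=> j; under eq_bigr do rewrite mxE; rewrite sumrN Ec oppr0.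
have fa1 := hup Xt (Xt + E) hXt D1.
have fa2 := hup Xt (Xt - E) hXt D2.
have e1 : Xt + E - Xt = E by rewrite addrC addKr.
have e2 : Xt - E - Xt = - E by rewrite addrC addKr.
rewrite e1 frob_norm_sq in fa1.
rewrite e2 frob_norm_sq fi_N fi_NN in fa2.
have m1 := hmin _ D1.
have m2 := hmin _ D2.
rewrite !frob_norm_sq in m1 m2.
set nu_h := p * (1 - p) * (1 + eps) `^ (p - 2) in hcoef.
have hb : \sum_i \sum_j ((Xt + E) i j + eps) `^ p + \sum_i \sum_j ((Xt - E) i j + eps) `^ p <=
     2 * \sum_i \sum_j (Xt i j + eps) `^ p - nu_h * frob_inner E E.
  rewrite -dsumD /frob_inner -!dsumZ -dsumB.
  apply: dsum_le => i j; rewrite !mxE.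
  apply: le_trans (@entry_ineq R p eps (Xt i j) (E i j) hp heps (h0 i j) (He i j)) _.
  by rewrite /nu_h expr2.
have nc : frob_inner (Xt + E - Xb) (Xt + E - Xb) + frob_inner (Xt - E - Xb) (Xt - E - Xb) =
    2 * frob_inner (Xt - Xb) (Xt - Xb) + 2 * frob_inner E E.
  rewrite /frob_inner -dsumD -!dsumZ -dsumD.
  by apply: eq_bigr => i _; apply: eq_bigr => j _; rewrite !mxE; ring.
have s1 := ler_wpM2l hsig hb.
have s2 : 0 < frob_inner E E * (sigma * nu_h - (nu_hi - 2 * mu)).
  by apply: mulr_gt0; [exact: fi_gt0 | lra].
have s3 := congr1 (fun x => mu * x) nc.
simpl in s3.
nra.
Qed.
End V.

Section W.
Variable R : realType.
Variable n : nat.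

Lemma vertex (f : 'M[R]_n -> R) (g : 'M[R]_n -> 'M[R]_n) (nu_hi p eps mu sigma : R)
  (Xb Xt : 'M[R]_n) :
  (forall X Y, doubly_stochastic X -> doubly_stochastic Y ->
     f Y - f X - frob_inner (g X) (Y - X) <= nu_hi / 2 * frob_norm (Y - X) ^+ 2) ->
  0 < p < 1 -> 0 <= eps -> 0 <= sigma ->
  nu_hi - 2 * mu < sigma * (p * (1 - p) * (1 + eps) `^ (p - 2)) ->
  doubly_stochastic Xt ->
  (forall X, doubly_stochastic X ->
     f Xt + sigma * (\sum_i \sum_j (Xt i j + eps) `^ p) - mu * frob_norm (Xt - Xb) ^+ 2 <=
     f X + sigma * (\sum_i \sum_j (X i j + eps) `^ p) - mu * frob_norm (X - Xb) ^+ 2) ->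
  is_perm_mx Xt.
Proof.
move=> hup hp heps hsig hcoef hXt hmin.
apply: contraT => hnp.
have [D [Dnz Dr Dc Ds]] := exists_dir hXt hnp.
have [t [t0 ht]] := @small_t R n Xt D Ds.
exfalso; apply: (@vertex_core R n f g nu_hi p eps mu sigma Xb Xt (t *: D)) => //.
- by rewrite scaler_eq0 negb_or gt_eqF.
- by move=> i; under eq_bigr do rewrite mxE; rewrite -mulr_sumr Dr mulr0.
- by move=> j; under eq_bigr do rewrite mxE; rewrite -mulr_sumr Dc mulr0.
move=> i j; rewrite mxE mulf_eq0 negb_or => /andP[_ nz].
have [a b] := ht i j nz.
have := Ds i j nz; rewrite /fracb => /andP[x0 x1].
have hn : `|t * D i j| = t * `|D i j| by rewrite normrM gtr0_norm.
have /andP[l1 l2] : - `|t * D i j| <= t * D i j <= `|t * D i j| by rewrite -ler_norml.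
rewrite hn in l1 l2; split; apply/andP; split; lra.
Qed.

Lemma DS_sum (X : 'M[R]_n) : doubly_stochastic X -> \sum_i \sum_j X i j = n%:R.
Proof.
move=> [_ [hr _]]; under eq_bigr do rewrite hr.
by rewrite sumr_const card_ord.
Qed.

Lemma perm_h (P : 'M[R]_n) (g : R -> R) : is_perm_mx P ->
  \sum_i \sum_j g (P i j) = n%:R * (n%:R * g 0 + (g 1 - g 0)).
Proof.
move=> /is_perm_mxP[s ->].
have inner : forall i, \sum_j g ((perm_mx s : 'M[R]_n) i j) = n%:R * g 0 + (g 1 - g 0).
  move=> i.
  rewrite (eq_bigr (fun j => g 0 + ((s i == j)%:R * (g 1 - g 0)))); last first.
    by move=> j _; rewrite perm_mxE'; case: (s i == j); rewrite /= ?mulr1n ?mulr0n; ring.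
  rewrite big_split /= sumr_const card_ord -mulr_suml sum_eq1 mul1r.
  by rewrite mulr_natl; reflexivity.
under eq_bigr do rewrite inner.
rewrite sumr_const card_ord; exact: esym (mulr_natl _ _).
Qed.

Lemma perm_norm_bound (P Q B : 'M[R]_n) : is_perm_mx P -> is_perm_mx Q ->
  doubly_stochastic B ->
  frob_inner (P - B) (P - B) - frob_inner (Q - B) (Q - B) <= 2 * n%:R.
Proof.
move=> hP hQ hB.
have [b0 _] := hB.
rewrite /frob_inner -dsumB.
apply: le_trans (@dsum_le R n _ (fun i j => P i j - Q i j + 2 * B i j) _) _.
  move=> i j; rewrite !mxE.
  have := b0 i j.
  by have [] := is_perm_01 i j hP => ->; have [] := is_perm_01 i j hQ => ->; nra.
rewrite dsumD dsumB dsumZ (DS_sum P (is_perm_DS hP)) (DS_sum Q (is_perm_DS hQ)) (DS_sum B hB).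
lra.
Qed.
End W.

Theorem theorem5p2 (R : realType) (n : nat) (f : 'M[R]_n -> R)
  (nu_lo nu_hi c2 p eps : R) (K : nat) (hatX : 'I_K -> 'M[R]_n) (mu sigma : R)
  (Xt : 'M[R]_n) :
  (forall X : 'M[R]_n, differentiable f X) ->
  nu_lo <= nu_hi ->
  (forall X Y : 'M[R]_n, doubly_stochastic X -> doubly_stochastic Y ->
     nu_lo / 2 * frob_norm (Y - X) ^+ 2
       <= f Y - f X - frob_inner (grad f X) (Y - X)
     /\ f Y - f X - frob_inner (grad f X) (Y - X)
       <= nu_hi / 2 * frob_norm (Y - X) ^+ 2) ->
  0 < c2 ->
  (forall X Y : 'M[R]_n, is_perm_mx X -> is_perm_mx Y -> f X != f Y ->
     c2 <= `|f X - f Y|) ->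
  0 < p < 1 ->
  0 <= eps ->
  (1 <= K)%N ->
  (forall i, doubly_stochastic (hatX i)) ->
  let nu_h := p * (1 - p) * (1 + eps) `^ (p - 2) in
  let Xbar := (K%:R)^-1 *: \sum_(i < K) hatX i in
  let F := fun X : 'M[R]_n =>
     f X + sigma * (\sum_(i < n) \sum_(j < n) (X i j + eps) `^ p)
         - mu * frob_norm (X - Xbar) ^+ 2 in
  0 < mu < c2 / (2 * n%:R) ->
  sigma > Num.max ((nu_hi - 2 * mu) / nu_h) 0 ->
  doubly_stochastic Xt ->
  (forall X, doubly_stochastic X -> F Xt <= F X) ->
  (is_perm_mx Xt /\ (forall X : 'M[R]_n, is_perm_mx X -> f Xt <= f X)) /\
  (forall Xs : 'M[R]_n, is_perm_mx Xs ->
     (forall X : 'M[R]_n, is_perm_mx X -> f Xs <= f X) ->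
     frob_norm (Xs - Xbar) <= frob_norm (Xt - Xbar)).
Proof.
move=> _ _ hcurv hc2 hc2' hp heps hK hhat nu_h Xbar F hmu hsig hXt hmin.
have [mu0 muc] := andP hmu.
have n0 : (0 < n)%N.
  case: (posnP n) => [n0'|//]; exfalso; move: muc; rewrite n0' mulr0 invr0 mulr0; lra.
have nR : 0 < (n%:R : R) by rewrite ltr0n.
have nuh0 : 0 < nu_h.
  rewrite /nu_h; apply: mulr_gt0; last by apply: powR_gt0; lra.
  by apply: mulr_gt0; case/andP: hp => ? ?; lra.
move: hsig; rewrite gt_max => /andP[hs1 hs2].
rewrite ltr_pdivrMr // in hs1.
have hsig0 : 0 <= sigma by exact: ltW.
have hup : forall X Y : 'M[R]_n, doubly_stochastic X -> doubly_stochastic Y ->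
   f Y - f X - frob_inner (grad f X) (Y - X) <= nu_hi / 2 * frob_norm (Y - X) ^+ 2.
  by move=> X Y hX hY; case: (hcurv X Y hX hY).
have hperm : is_perm_mx Xt.
  by apply: (@vertex R n f (grad f) nu_hi p eps mu sigma Xbar Xt hup hp heps hsig0 hs1 hXt hmin).
have Kpos : 0 < (K%:R : R) by rewrite ltr0n.
have hXb : doubly_stochastic Xbar.
  split.
    move=> i j; rewrite /Xbar mxE summxE; apply: mulr_ge0; first by rewrite invr_ge0 ltW.
    by apply: sumr_ge0 => k _; case: (hhat k) => h _; exact: h.
  split.
    move=> i; rewrite /Xbar.
    under eq_bigr do rewrite mxE summxE.
    rewrite -mulr_sumr exchange_big /=.
    under eq_bigr => k _ do rewrite (proj1 (proj2 (hhat k)) i).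
    by rewrite sumr_const card_ord mulVf // gt_eqF.
  move=> j; rewrite /Xbar.
  under eq_bigr do rewrite mxE summxE.
  rewrite -mulr_sumr exchange_big /=.
  under eq_bigr => k _ do rewrite (proj2 (proj2 (hhat k)) j).
  by rewrite sumr_const card_ord mulVf // gt_eqF.
have hh := fun P (hP : is_perm_mx P) => @perm_h R n P (fun x => (x + eps) `^ p) hP.
have hmuc : mu * (2 * n%:R) < c2 by rewrite -ltr_pdivlMr // pmulr_rgt0.
have part1 : forall X : 'M[R]_n, is_perm_mx X -> f Xt <= f X.
  move=> X hX; rewrite leNgt; apply/negP => hlt.
  have hne : f Xt != f X by rewrite gt_eqF.
  have := hc2' Xt X hperm hX hne; rewrite gtr0_norm ?subr_gt0 // => hc.
  have hF := hmin X (is_perm_DS hX).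
  rewrite /F /= !frob_norm_sq (hh Xt hperm) (hh X hX) in hF.
  have hb := @perm_norm_bound R n Xt X Xbar hperm hX hXb.
  have := ler_wpM2l (ltW mu0) hb.
  lra.
split; first by split.
move=> Xs hXs hXsmin.
have e : f Xs = f Xt by apply/eqP; rewrite eq_le hXsmin // part1.
have hF := hmin Xs (is_perm_DS hXs).
rewrite /F /= !frob_norm_sq (hh Xt hperm) (hh Xs hXs) e in hF.
have : mu * frob_inner (Xs - Xbar) (Xs - Xbar) <= mu * frob_inner (Xt - Xbar) (Xt - Xbar) by lra.
rewrite ler_pM2l // => hle.
by rewrite /frob_norm; apply: ler_wsqrtr.
Qed.
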